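(* Let $n,m\ge1$, $c_1,\dots,c_n>0$, $T>0$, $\epsilon>0$, $r_1,\dots,r_m>0$ and $\kappa_{ij}\ge0$. For $\mu\in\mathbb{R}^n$ let $\varphi^i_\epsilon(\mu)=-\epsilon\log\big(\sum_{j=1}^n e^{-(\kappa_{ij}+\mu_j)/\epsilon}\big)$, and define on $[0,T)^n$ $$D(\mu)=\sum_{i=1}^m r_i\varphi^i_\epsilon(\mu)+\sum_{j=1}^n c_j\log\Big(1-\frac{\mu_j}{T}\Big).$$ Then $D$ is strictly concave on $[0,T)^n$ and has a finite maximum $D^*$ over $[0,T)^n$, achieved at a unique $\mu^*\in[0,T)^n$.
   Context: $D$ is the Lagrange dual function of the station-assignment optimization problem (minimizing $\sum\kappa_{ij}x_{ij}+\sum_j\beta_j(q_j)+\epsilon\sum x_{ij}\log(x_{ij}/r_i)$ subject to $x_{ij}\ge0$, $\sum_jx_{ij}=r_i$, $\sum_ix_{ij}=q_j/T$), dualized with respect to the last constraint. *)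

(* Defs.v *)
From mathcomp Require Import all_boot all_order all_algebra.
From mathcomp Require Import reals.
From mathcomp Require Import sequences exp.
Set Implicit Arguments. Unset Strict Implicit. Unset Printing Implicit Defensive.
Import Order.TTheory GRing.Theory Num.Theory.
Local Open Scope ring_scope.

Definition phi_eps (R : realType) (n m : nat) (eps : R)
  (kappa : 'I_m -> 'I_n -> R) (i : 'I_m) (mu : 'I_n -> R) : R :=
  - eps * ln (\sum_(j < n) expR (- (kappa i j + mu j) / eps)).

Definition Dual (R : realType) (n m : nat) (c : 'I_n -> R) (T eps : R)
  (r : 'I_m -> R) (kappa : 'I_m -> 'I_n -> R) (mu : 'I_n -> R) : R :=
  \sum_(i < m) r i * phi_eps eps kappa i mu
  + \sum_(j < n) c j * ln (1 - mu j / T).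

Definition in_box (R : realType) (n : nat) (T : R) (mu : 'I_n -> R) : Prop :=
  forall j, 0 <= mu j /\ mu j < T.

Definition strictly_concave_on (R : realType) (n : nat)
  (S : ('I_n -> R) -> Prop) (f : ('I_n -> R) -> R) : Prop :=
  forall (x y : 'I_n -> R) (t : R), S x -> S y -> x <> y -> 0 < t < 1 ->
    t * f x + (1 - t) * f y < f (fun j => t * x j + (1 - t) * y j).

(* Main.v *)
Require Import Defs.
From mathcomp Require Import all_boot all_order all_algebra.
From mathcomp Require Import reals.
From mathcomp Require Import sequences exp.
From mathcomp Require Import all_classical all_analysis.
From mathcomp Require Import ring lra.
Import Order.TTheory GRing.Theory Num.Theory.
Import numFieldNormedType.Exports.
Local Open Scope ring_scope.
Set Implicit Arguments. Unset Strict Implicit.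
From Stdlib Require Import FunctionalExtensionality.
Lemma expR_conv (R : realType) (a b t : R) : 0 <= t <= 1 ->
  expR (t * a + (1 - t) * b) <= t * expR a + (1 - t) * expR b.
Proof.
move=> /andP[t0 t1].
set w := t * a + (1 - t) * b.
have ha : expR w * (1 + (a - w)) <= expR a.
  have -> : expR a = expR w * expR (a - w) by rewrite -expRD addrC subrK.
  by rewrite ler_pM2l ?expR_gt0 // expR_ge1Dx.
have hb : expR w * (1 + (b - w)) <= expR b.
  have -> : expR b = expR w * expR (b - w) by rewrite -expRD addrC subrK.
  by rewrite ler_pM2l ?expR_gt0 // expR_ge1Dx.
have e : expR w = t * (expR w * (1 + (a - w))) + (1 - t) * (expR w * (1 + (b - w))).
  rewrite /w; ring.
rewrite [X in X <= _]e lerD // ler_wpM2l //; lra.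
Qed.

Lemma ln_lt_sub1 (R : realType) (x : R) : 0 < x -> x != 1 -> ln x < x - 1.
Proof.
move=> x0 x1.
have hl : ln x != 0 by rewrite ln_eq0.
have := expR_gt1Dx hl; rewrite lnK ?posrE //; lra.
Qed.

Lemma ln_le_sub1 (R : realType) (x : R) : 0 < x -> ln x <= x - 1.
Proof.
move=> x0; have := expR_ge1Dx (ln x); rewrite lnK ?posrE //; lra.
Qed.


Lemma ln_conc (R : realType) (p q t : R) : 0 < p -> 0 < q -> 0 < t < 1 ->
  t * ln p + (1 - t) * ln q <= ln (t * p + (1 - t) * q)
  /\ (p != q -> t * ln p + (1 - t) * ln q < ln (t * p + (1 - t) * q)).
Proof.
move=> p0 q0 /andP[t0 t1].
set w := t * p + (1 - t) * q.
have w0 : 0 < w by rewrite /w; nra.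
have hp : ln p = ln w + ln (p / w).
  by rewrite -lnM ?posrE ?divr_gt0 // mulrC divfK // gt_eqF.
have hq : ln q = ln w + ln (q / w).
  by rewrite -lnM ?posrE ?divr_gt0 // mulrC divfK // gt_eqF.
have key : t * (p / w - 1) + (1 - t) * (q / w - 1) = 0.
  rewrite /w; field; rewrite -/w gt_eqF //.
split.
  rewrite hp hq.
  have := ln_le_sub1 (divr_gt0 p0 w0); have := ln_le_sub1 (divr_gt0 q0 w0).
  nra.
move=> pq.
have pw : p / w != 1.
  apply/eqP => /(congr1 (fun z => z * w)); rewrite divfK ?gt_eqF // mul1r => e.
  move: pq; rewrite /w in e; apply/negP; rewrite negbK; apply/eqP.
  have : (1 - t) * (p - q) = 0.
    have -> : (1 - t) * (p - q) = p - (t * p + (1 - t) * q) by ring.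
    by rewrite -e subrr.
  move/eqP; rewrite mulf_eq0 subr_eq0 => /orP[/eqP|/eqP//]; lra.
rewrite hp hq.
have := ln_lt_sub1 (divr_gt0 p0 w0) pw; have := ln_le_sub1 (divr_gt0 q0 w0).
nra.
Qed.

Lemma sum_exp_gt0 (R : realType) n (hn : (0 < n)%N) (f : 'I_n -> R) :
  0 < \sum_(j < n) expR (f j).
Proof.
rewrite (bigD1 (Ordinal hn)) //=.
have h1 := expR_gt0 (f (Ordinal hn)).
have h2 : 0 <= \sum_(i < n | i != Ordinal hn) expR (f i).
  by apply: sumr_ge0 => i _; exact: expR_ge0.
lra.
Qed.


Lemma lse_conv (R : realType) n (hn : (0 < n)%N) (u v : 'I_n -> R) (t : R) :
  0 <= t <= 1 ->
  ln (\sum_(j < n) expR (t * u j + (1 - t) * v j))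
  <= t * ln (\sum_(j < n) expR (u j)) + (1 - t) * ln (\sum_(j < n) expR (v j)).
Proof.
move=> ht.
set A := \sum_(j < n) expR (u j); set B := \sum_(j < n) expR (v j).
have A0 : 0 < A := sum_exp_gt0 hn u.
have B0 : 0 < B := sum_exp_gt0 hn v.
set L := t * ln A + (1 - t) * ln B.
have S0 : 0 < \sum_(j < n) expR (t * u j + (1 - t) * v j) := sum_exp_gt0 hn _.
suff : \sum_(j < n) expR (t * u j + (1 - t) * v j) <= expR L.
  move=> h; rewrite -[L]expRK ler_ln ?posrE ?expR_gt0 //.
have step j : expR (t * u j + (1 - t) * v j)
    <= expR L * (t * (expR (u j) / A) + (1 - t) * (expR (v j) / B)).
  have -> : t * u j + (1 - t) * v j
      = L + (t * (u j - ln A) + (1 - t) * (v j - ln B)) by rewrite /L; ring.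
  rewrite expRD ler_pM2l ?expR_gt0 //.
  have -> : expR (u j) / A = expR (u j - ln A).
    by rewrite expRD expRN lnK ?posrE.
  have -> : expR (v j) / B = expR (v j - ln B).
    by rewrite expRD expRN lnK ?posrE.
  exact: expR_conv.
apply: (le_trans (ler_sum _ (fun j _ => step j))).
rewrite -mulr_sumr big_split /= -!mulr_sumr -!mulr_suml -/A -/B.
rewrite !divff ?gt_eqF // !mulr1 subrKC mulr1 //.
Qed.


Lemma phi_conc (R : realType) n m (hn : (0 < n)%N) (eps : R) (kappa : 'I_m -> 'I_n -> R)
  i (x y : 'I_n -> R) (t : R) : 0 < eps -> 0 <= t <= 1 ->
  t * phi_eps eps kappa i x + (1 - t) * phi_eps eps kappa i y
  <= phi_eps eps kappa i (fun j => t * x j + (1 - t) * y j).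
Proof.
move=> he ht; rewrite /phi_eps.
have := lse_conv hn (fun j => - (kappa i j + x j) / eps) (fun j => - (kappa i j + y j) / eps) ht.
move=> h.
have -> : \sum_(j < n) expR (- (kappa i j + (t * x j + (1 - t) * y j)) / eps)
  = \sum_(j < n) expR (t * (- (kappa i j + x j) / eps) + (1 - t) * (- (kappa i j + y j) / eps)).
  by apply: eq_bigr => j _; congr expR; ring.
nra.
Qed.

Lemma phi_ub (R : realType) n m (hn : (0 < n)%N) (T eps : R) (kappa : 'I_m -> 'I_n -> R)
  i (mu : 'I_n -> R) : 0 < eps -> in_box T mu ->
  phi_eps eps kappa i mu <= phi_eps eps kappa i (fun _ => 0) + T.
Proof.
move=> he hb; rewrite /phi_eps.
set A := \sum_(j < n) expR (- (kappa i j + 0) / eps).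
set S := \sum_(j < n) expR (- (kappa i j + mu j) / eps).
have A0 : 0 < A := sum_exp_gt0 hn _.
have S0 : 0 < S := sum_exp_gt0 hn _.
have h1 : expR (- T / eps) * A <= S.
  rewrite /A mulr_sumr; apply: ler_sum => j _; rewrite -expRD ler_expR.
  have [m0 mT] := hb j.
  rewrite -subr_ge0.
  have -> : - (kappa i j + mu j) / eps - (- T / eps + - (kappa i j + 0) / eps)
      = (T - mu j) / eps by ring.
  apply: divr_ge0; lra.
have h2 : - T / eps + ln A <= ln S.
  by rewrite -[- T / eps]expRK -lnM ?posrE ?expR_gt0 // ler_ln ?posrE ?mulr_gt0 ?expR_gt0.
have h3 : eps * (- T / eps) = - T by rewrite mulrC divfK ?gt_eqF.
nra.
Qed.

Lemma Dual0 (R : realType) n m (c : 'I_n -> R) (T eps : R) (r : 'I_m -> R)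
  (kappa : 'I_m -> 'I_n -> R) :
  Dual c T eps r kappa (fun _ => 0) = \sum_(i < m) r i * phi_eps eps kappa i (fun _ => 0).
Proof.
rewrite /Dual [X in _ + X]big1 ?addr0 // => j _; by rewrite mul0r subr0 ln1 mulr0.
Qed.

Lemma Dual_ub (R : realType) n m (hn : (0 < n)%N) (c : 'I_n -> R) (T eps : R) (r : 'I_m -> R)
  (kappa : 'I_m -> 'I_n -> R) (hc : forall j, 0 < c j) (hT : 0 < T) (heps : 0 < eps)
  (hr : forall i, 0 < r i) (mu : 'I_n -> R) (j0 : 'I_n) : in_box T mu ->
  Dual c T eps r kappa mu <= Dual c T eps r kappa (fun _ => 0) + T * \sum_(i < m) r i
     + c j0 * ln (1 - mu j0 / T).
Proof.
move=> hb; rewrite Dual0 /Dual.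
have h1 : \sum_(i < m) r i * phi_eps eps kappa i mu
    <= \sum_(i < m) r i * phi_eps eps kappa i (fun _ => 0) + T * \sum_(i < m) r i.
  rewrite mulr_sumr -big_split /=; apply: ler_sum => i _.
  have := phi_ub hn kappa i heps hb; have := hr i; nra.
have h2 : \sum_(j < n) c j * ln (1 - mu j / T) <= c j0 * ln (1 - mu j0 / T).
  rewrite (bigD1 j0) //= -[X in _ <= X]addr0 lerD2l; apply: sumr_le0 => j _.
  have hl : ln (1 - mu j / T) <= 0.
    apply: ln_le0; have [m0 _] := hb j.
    have : 0 <= mu j / T by apply: divr_ge0 => //; exact: ltW.
    lra.
  have := hc j; nra.
lra.
Qed.

Lemma sum_lt (R : realType) n (F G : 'I_n -> R) (j0 : 'I_n) :
  (forall j, F j <= G j) -> F j0 < G j0 -> \sum_(j < n) F j < \sum_(j < n) G j.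
Proof.
move=> hle hlt; rewrite (bigD1 j0) //= [X in _ < X](bigD1 j0) //=.
by apply: ltr_leD => //; apply: ler_sum => j _.
Qed.

Lemma Dual_sconc (R : realType) n m (hn : (0 < n)%N) (c : 'I_n -> R) (T eps : R) (r : 'I_m -> R)
  (kappa : 'I_m -> 'I_n -> R) (hc : forall j, 0 < c j) (hT : 0 < T) (heps : 0 < eps)
  (hr : forall i, 0 < r i) :
  strictly_concave_on (in_box T) (Dual c T eps r kappa).
Proof.
move=> x y t hx hy xy /andP[t0 t1].
have [j0 hj0] : exists j0, x j0 != y j0.
  case: (boolP [forall j, x j == y j]) => [/forallP h|].
    by exfalso; apply: xy; apply: functional_extensionality => j; apply/eqP.
  by rewrite negb_forall => /existsP[j hj]; exists j.
rewrite /Dual.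
set Ax := \sum_(i < m) _; set Ay := \sum_(i < m) _; set Bx := \sum_(j < n) _;
  set By := \sum_(j < n) _.
have -> : t * (Ax + Bx) + (1 - t) * (Ay + By) = (t * Ax + (1 - t) * Ay) + (t * Bx + (1 - t) * By)
  by ring.
apply: ler_ltD.
  rewrite /Ax /Ay !mulr_sumr -big_split /=; apply: ler_sum => i _.
  have := phi_conc hn kappa i x y heps (_ : 0 <= t <= 1).
  have ht : 0 <= t <= 1 by apply/andP; split; lra.
  move=> /(_ ht) h; have := hr i; nra.
rewrite /Bx /By !mulr_sumr -big_split /=.
have key j : t * (c j * ln (1 - x j / T)) + (1 - t) * (c j * ln (1 - y j / T))
   <= c j * ln (1 - (t * x j + (1 - t) * y j) / T)
  /\ (x j != y j -> t * (c j * ln (1 - x j / T)) + (1 - t) * (c j * ln (1 - y j / T))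
   < c j * ln (1 - (t * x j + (1 - t) * y j) / T)).
  have p0 : 0 < 1 - x j / T.
    have [_ h] := hx j; rewrite subr_gt0 ltr_pdivrMr // mul1r //.
  have q0 : 0 < 1 - y j / T.
    have [_ h] := hy j; rewrite subr_gt0 ltr_pdivrMr // mul1r //.
  have ht : 0 < t < 1 by apply/andP.
  have [h1 h2] := ln_conc p0 q0 ht.
  have -> : 1 - (t * x j + (1 - t) * y j) / T = t * (1 - x j / T) + (1 - t) * (1 - y j / T)
    by ring.
  have := hc j => cj.
  split; first nra.
  move=> xyj.
  have pq : 1 - x j / T != 1 - y j / T.
    apply: contra xyj => /eqP e; apply/eqP.
    have : x j / T = y j / T by lra.
    by move/(congr1 (fun z => z * T)); rewrite !divfK ?gt_eqF.
  have := h2 pq; nra.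
apply: (sum_lt (j0:=j0)) => [j|]; first exact: (key j).1.
exact: (key j0).2.
Qed.
Lemma cvg_bigsum (T : topologicalType) (R : realType) (I : Type) (s : seq I)
  (F : I -> T -> R) x :
  (forall i, {for x, continuous (F i)}) ->
  {for x, continuous (fun y => \sum_(i <- s) F i y)}.
Proof.
move=> h; elim: s => [|a s IH].
  rewrite (_ : (fun y => \sum_(i <- [::]) F i y) = (fun _ => 0)); last by apply: funext => y; rewrite big_nil.
  exact: cvg_cst.
rewrite (_ : (fun y => \sum_(i <- a :: s) F i y) = (fun y => F a y + \sum_(i <- s) F i y)); last first.
  by apply: funext => y; rewrite big_cons.
by apply: cvgD; [exact: h|exact: IH].
Qed.



Lemma cont_add (T : topologicalType) (R : realType) (f g : T -> R) x :
  {for x, continuous f} -> {for x, continuous g} -> {for x, continuous (fun y => f y + g y)}.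
Proof. by move=> hf hg; apply: cvgD. Qed.

Lemma cont_mull (T : topologicalType) (R : realType) (a : R) (f : T -> R) x :
  {for x, continuous f} -> {for x, continuous (fun y => a * f y)}.
Proof. by move=> hf; apply: cvgMr. Qed.

Lemma cont_mulr (T : topologicalType) (R : realType) (a : R) (f : T -> R) x :
  {for x, continuous f} -> {for x, continuous (fun y => f y * a)}.
Proof. by move=> hf; apply: cvgMl. Qed.

Lemma cont_opp (T : topologicalType) (R : realType) (f : T -> R) x :
  {for x, continuous f} -> {for x, continuous (fun y => - f y)}.
Proof. by move=> hf; apply: cvgN. Qed.

Lemma cont_cst (T : topologicalType) (R : realType) (a : R) (x : T) :
  {for x, continuous (fun _ => a)}.
Proof. exact: cvg_cst. Qed.

Lemma cont_comp (T : topologicalType) (R : realType) (f : T -> R) (g : R -> R) x :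
  {for x, continuous f} -> {for f x, continuous g} -> {for x, continuous (fun y => g (f y))}.
Proof. by move=> hf hg; apply: (continuous_comp hf hg). Qed.

Notation PT R n := ({ptws 'I_n -> R}).

Lemma proj_cont (R : realType) n (x : 'I_n -> R) j :
   {for (x : PT R n), continuous (fun y : PT R n => y j)}.
Proof. exact: (@proj_continuous _ (fun _ => R) j x). Qed.

Lemma Dual_cont (R : realType) n m (hn : (0 < n)%N) (c : 'I_n -> R) (T eps : R) (r : 'I_m -> R)
  (kappa : 'I_m -> 'I_n -> R) (hT : 0 < T) (x : 'I_n -> R) :
  (forall j, x j < T) ->
   {for (x : PT R n), continuous (Dual c T eps r kappa : PT R n -> R)}.
Proof.
move=> hx; rewrite /Dual.
apply: (cont_add (f := fun mu : PT R n => \sum_(i < m) r i * phi_eps eps kappa i mu)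
  (g := fun mu : PT R n => \sum_(j < n) c j * ln (1 - mu j / T))).
  apply: (cvg_bigsum (F := fun i (mu : PT R n) => r i * phi_eps eps kappa i mu)) => i.
  apply: (cont_mull (f := fun mu : PT R n => phi_eps eps kappa i mu)).
  rewrite /phi_eps.
  apply: (cont_mull (f := fun mu : PT R n => ln (\sum_(j < n) expR (- (kappa i j + mu j) / eps)))).
  apply: (cont_comp (f := fun mu : PT R n => \sum_(j < n) expR (- (kappa i j + mu j) / eps)) (g := @ln R)).
    apply: (cvg_bigsum (F := fun j (mu : PT R n) => expR (- (kappa i j + mu j) / eps))) => j.
    apply: (cont_comp (f := fun mu : PT R n => - (kappa i j + mu j) / eps) (g := @expR R)).
      apply: (cont_mulr (f := fun mu : PT R n => - (kappa i j + mu j))).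
      apply: (cont_opp (f := fun mu : PT R n => kappa i j + mu j)).
      apply: (cont_add (f := fun mu : PT R n => kappa i j) (g := fun mu : PT R n => mu j)).
        exact: cont_cst.
      exact: proj_cont.
    exact: continuous_expR.
  apply: continuous_ln.
  rewrite (bigD1 (Ordinal hn)) //=.
  have h1 := expR_gt0 (- (kappa i (Ordinal hn) + x (Ordinal hn)) / eps).
  have h2 : 0 <= \sum_(j < n | j != Ordinal hn) expR (- (kappa i j + x j) / eps).
    by apply: sumr_ge0 => j _; exact: expR_ge0.
  lra.
apply: (cvg_bigsum (F := fun j (mu : PT R n) => c j * ln (1 - mu j / T))) => j.
apply: (cont_mull (f := fun mu : PT R n => ln (1 - mu j / T))).
apply: (cont_comp (f := fun mu : PT R n => 1 - mu j / T) (g := @ln R)).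
  apply: (cont_add (f := fun mu : PT R n => 1) (g := fun mu : PT R n => - (mu j / T))).
    exact: cont_cst.
  apply: (cont_opp (f := fun mu : PT R n => mu j / T)).
  apply: (cont_mulr (f := fun mu : PT R n => mu j)).
  exact: proj_cont.
apply: continuous_ln.
by rewrite subr_gt0 ltr_pdivrMr // mul1r.
Qed.

Lemma Kcompact (R : realType) n (b : 'I_n -> R) :
  compact [set f : PT R n | forall j, `[0, b j]%classic (f j)].
Proof.
have := (@tychonoff _ (fun _ => R) (fun j : 'I_n => `[0, b j]%classic) (fun j => @segment_compact R 0 (b j))).
move=> h. exact: h.
Qed.

Lemma Dual_exists (R : realType) n m (hn : (0 < n)%N) (c : 'I_n -> R) (T eps : R) (r : 'I_m -> R)
  (kappa : 'I_m -> 'I_n -> R) (hc : forall j, 0 < c j) (hT : 0 < T) (heps : 0 < eps)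
  (hr : forall i, 0 < r i) :
  exists mustar, in_box T mustar /\
    forall mu, in_box T mu -> Dual c T eps r kappa mu <= Dual c T eps r kappa mustar.
Proof.
set S := \sum_(i < m) r i.
have S0 : 0 <= S by apply: sumr_ge0 => i _; exact: ltW.
pose d j := T * expR (- (T * S) / c j).
pose b j := T - d j.
have d0 j : 0 < d j by rewrite mulr_gt0 ?expR_gt0.
have dT j : d j <= T.
  rewrite /d -[X in _ <= X]mulr1 ler_pM2l // -expR0 ler_expR.
  rewrite mulNr oppr_le0 divr_ge0 ?mulr_ge0 //; exact: ltW.
have b0 j : 0 <= b j by rewrite /b subr_ge0.
have bT j : b j < T by rewrite /b ltrBlDr ltrDl.
pose K := [set f : PT R n | forall j, `[0, b j]%classic (f j)]%classic.
have K0 : K (fun _ => 0) by move=> j /=; rewrite in_itv /= lexx b0.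
have [c0 c0K c0max] : exists2 c0, c0 \in K & forall t, t \in K ->
    (Dual c T eps r kappa : PT R n -> R) t <= Dual c T eps r kappa c0.
  apply: compact_EVT_max; first by exists (fun _ => 0).
    exact: Kcompact.
  apply: continuous_in_subspaceT => x /set_mem xK.
  apply: Dual_cont => // j.
  have := xK j; rewrite /= in_itv /= => /andP[_ h].
  exact: le_lt_trans h (bT j).
have c0K' := set_mem c0K.
exists c0; split.
  move=> j; have := c0K' j; rewrite /= in_itv /= => /andP[h1 h2].
  by split => //; exact: le_lt_trans h2 (bT j).
move=> mu hmu.
case: (boolP [forall j : 'I_n, mu j <= b j]) => [/forallP hb|].
  apply: c0max; apply/mem_set => j /=; rewrite in_itv /= hb andbT.
  by have [] := hmu j.
rewrite negb_forall => /existsP[j hj]; rewrite -ltNge in hj.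
have hub := @Dual_ub R n m hn c T eps r kappa hc hT heps hr mu j hmu.
have h0 : Dual c T eps r kappa (fun _ => 0) <= Dual c T eps r kappa c0.
  by apply: c0max; apply/mem_set.
have [m0 mT] := hmu j.
have p0 : 0 < 1 - mu j / T by rewrite subr_gt0 ltr_pdivrMr // mul1r.
have plt : 1 - mu j / T < expR (- (T * S) / c j).
  have h : b j < mu j := hj; rewrite /b /d in h.
  have e1 : T * (1 - mu j / T) = T - mu j by rewrite mulrBr mulr1 mulrC divfK ?gt_eqF.
  rewrite -(ltr_pM2l hT) e1; lra.
have hl : ln (1 - mu j / T) < - (T * S) / c j.
  by rewrite -[X in _ < X]expRK ltr_ln ?posrE ?expR_gt0.
have hcj := hc j.
have e : c j * (- (T * S) / c j) = - (T * S) by rewrite mulrC divfK ?gt_eqF.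
have : c j * ln (1 - mu j / T) < - (T * S) by rewrite -e ltr_pM2l.
rewrite -/S in hub.
lra.
Qed.

Unset Implicit Arguments. Set Strict Implicit.

Theorem proposition2 (R : realType) (n m : nat) (hn : (1 <= n)%N) (hm : (1 <= m)%N)
  (c : 'I_n -> R) (T eps : R) (r : 'I_m -> R) (kappa : 'I_m -> 'I_n -> R)
  (hc : forall j, 0 < c j) (hT : 0 < T) (heps : 0 < eps)
  (hr : forall i, 0 < r i) (hkappa : forall i j, 0 <= kappa i j) :
  strictly_concave_on (in_box T) (Dual c T eps r kappa) /\
  exists mustar : 'I_n -> R,
    [/\ in_box T mustar,
        (forall mu, in_box T mu -> Dual c T eps r kappa mu <= Dual c T eps r kappa mustar)
      & (forall mu, in_box T mu ->
           (forall nu, in_box T nu -> Dual c T eps r kappa nu <= Dual c T eps r kappa mu) ->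
           mu = mustar)].
Proof.
have hsc := @Dual_sconc R n m hn c T eps r kappa hc hT heps hr.
split => //.
have [ms [hb hmax]] := @Dual_exists R n m hn c T eps r kappa hc hT heps hr.
exists ms; split => // mu hmu hmumax.
have [//|neq] := pselect (mu = ms).
exfalso.
pose t : R := 2^-1.
have t0 : 0 < t by rewrite /t invr_gt0.
have t1 : t < 1 by rewrite /t; lra.
pose z := fun j => t * mu j + (1 - t) * ms j.
have hz : in_box T z.
  move=> j; have [a1 a2] := hmu j; have [b1 b2] := hb j; rewrite /z; split; nra.
have ht : 0 < t < 1 by rewrite t0 t1.
have := hsc mu ms t hmu hb neq ht.
have := hmax z hz; have := hmumax ms hb; have := hmax mu hmu.
rewrite -/z; nra.
Qed.
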